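(* Let $\mathcal{G}\subseteq\{0,1\}^{\mathcal{X}}$, $\mathcal{H}\subseteq\{-1,+1\}^{\mathcal{X}}$, and $c^*\in\mathcal{C}(\mathcal{G},\mathcal{H})$. For $c\colon\mathcal{X}\to\{-1,+1\}$ let $(c\triangle c^* )(x)=\mathbf{1}[c(x)\neq c^*(x)]$. (i) For fixed $g\in\mathcal{G}$, the class $\mathcal{F}_g=\{x\mapsto g(x)(c\triangle c^* )(x) : c\in\mathcal{C}(\mathcal{G},\mathcal{H})\}$ satisfies $\mathcal{S}_{\mathcal{X}}(\mathcal{F}_g,k)\le \mathcal{S}_g(\mathcal{H},k)$ for every $k\ge1$. (ii) The class $\mathcal{F}=\{x\mapsto g(x)(c\triangle c^* )(x) : g\in\mathcal{G},\ c\in\mathcal{C}(\mathcal{G},\mathcal{H})\}$ satisfies $\mathcal{S}_{\mathcal{X}}(\mathcal{F},k)\le \mathcal{S}_{\mathcal{X}}(\mathcal{G},k)\cdot\sup_{g\in\mathcal{G}}\mathcal{S}_g(\mathcal{H},k)$ for every $k\ge 1$.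
   Context: A group $g \in \mathcal{G}$ is identified both with a function $g\colon \mathcal{X}\to\{0,1\}$ and with the subset $\{x : g(x)=1\}\subseteq \mathcal{X}$. Given $\mathcal{G}\subseteq\{0,1\}^{\mathcal{X}}$ and $\mathcal{H}\subseteq\{-1,+1\}^{\mathcal{X}}$ on the same domain $\mathcal{X}$, the set of group-realizable concepts $\mathcal{C}(\mathcal{G},\mathcal{H})\subseteq\{-1,+1\}^{\mathcal{X}}$ is the set of all functions $c\colon\mathcal{X}\to\{-1,+1\}$ such that for each $g\in\mathcal{G}$ there exists $h\in\mathcal{H}$ with $c(x)=h(x)$ for all $x\in g$. For a class $\mathcal{F}$ of functions on a domain $\mathcal{Z}$, the $k$-th shattering coefficient is $\mathcal{S}_{\mathcal{Z}}(\mathcal{F},k)=\sup_{z_1,\dots,z_k\in\mathcal{Z}}\left|\{(f(z_1),\dots,f(z_k)) : f\in\mathcal{F}\}\right|$; $\mathcal{S}_g(\mathcal{H},k)$ denotes this quantity with domain $\mathcal{Z}=g$ (points restricted to $g$). *)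

(* Defs.v *)
From mathcomp Require Import all_boot all_order.
From mathcomp Require Import boolp classical_sets.
Set Implicit Arguments. Unset Strict Implicit. Unset Printing Implicit Defensive.

(* Labels {-1,+1} are encoded as bool: true = +1, false = -1.
   Groups g : X -> bool are {0,1}-valued (true = 1); g is also read as the
   subset {x | g x}. *)

Definition group_realizable (X : Type) (G : set (X -> bool)) (H : set (X -> bool))
  : set (X -> bool) :=
  fun c => forall g, G g -> exists h, H h /\ forall x, g x -> c x = h x.

Definition npat (X : Type) (Y : finType) (F : set (X -> Y)) (k : nat)
  (z : 'I_k -> X) : nat :=
  #|[set t : {ffun 'I_k -> Y} | `[< exists f, F f /\ t = [ffun i => f (z i)] >]]|.

(* k-th shattering coefficient of F on the domain Z (a predicate on X):
   sup over z_1..z_k in Z of npat. Since npat <= #|{ffun 'I_k -> Y}|, this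
   sup is a max over a bounded range of naturals (0 if no such tuple). *)
Definition shatter (X : Type) (Y : finType) (Z : X -> bool) (F : set (X -> Y))
  (k : nat) : nat :=
  \max_(n < #|{ffun 'I_k -> Y}|.+1 |
          `[< exists z : 'I_k -> X, (forall i, Z (z i)) /\ npat F z = n >]) n.

(* sup_{g in G} S_g(H,k)  (bounded by #|{ffun 'I_k -> bool}|; 0 if G empty) *)
Definition sup_group_shatter (X : Type) (G : set (X -> bool)) (H : set (X -> bool))
  (k : nat) : nat :=
  \max_(n < #|{ffun 'I_k -> bool}|.+1 |
          `[< exists g, G g /\ shatter g H k = n >]) n.

Definition symdiff (X : Type) (c cstar : X -> bool) : X -> bool :=
  fun x => c x != cstar x.

Definition F_group (X : Type) (G H : set (X -> bool)) (cstar : X -> bool)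
  (g : X -> bool) : set (X -> bool) :=
  fun f => exists c, group_realizable G H c /\ f = (fun x => g x && symdiff c cstar x).

Definition F_all (X : Type) (G H : set (X -> bool)) (cstar : X -> bool)
  : set (X -> bool) :=
  fun f => exists g c, G g /\ group_realizable G H c /\
                       f = (fun x => g x && symdiff c cstar x).

(* Main.v *)
Require Import Defs.
From mathcomp Require Import all_boot all_order.
From mathcomp Require Import boolp classical_sets.

Section Aux.
Local Open Scope nat_scope.

Lemma card_bigcup_leq (I T : finType) (P : {pred I}) (F : I -> {set T}) :
  #|\bigcup_(i in P) F i| <= \sum_(i in P) #|F i|.
Proof.
apply: (big_ind2 (fun (A : {set T}) n => #|A| <= n)).
- by rewrite cards0.
- move=> A n B m hA hB; apply: leq_trans (leq_card_setU A B) _.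
  exact: leq_add.
- by [].
Qed.

Lemma npat_le_card (X : Type) (Y : finType) (F : set (X -> Y)) k (z : 'I_k -> X) :
  npat F z < #|{ffun 'I_k -> Y}|.+1.
Proof. by rewrite ltnS /npat max_card. Qed.

Lemma shatter_ge (X : Type) (Y : finType) (Z : X -> bool) (F : set (X -> Y)) k
  (z : 'I_k -> X) : (forall i, Z (z i)) -> npat F z <= shatter Z F k.
Proof.
move=> hz; rewrite /shatter.
have := @leq_bigmax_cond _
  (fun n : 'I_#|{ffun 'I_k -> Y}|.+1 =>
     `[< exists z : 'I_k -> X, (forall i, Z (z i)) /\ npat F z = n >])
  (fun n => nat_of_ord n) (Ordinal (@npat_le_card X Y F k z)).
apply; apply/asboolP; by exists z.
Qed.

Lemma shatter_le (X : Type) (Y : finType) (Z : X -> bool) (F : set (X -> Y)) k m :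
  (forall z : 'I_k -> X, (forall i, Z (z i)) -> npat F z <= m) ->
  shatter Z F k <= m.
Proof.
move=> h; rewrite /shatter; apply/bigmax_leqP => n /asboolP [z [hz <-]].
exact: h.
Qed.

Lemma shatter_bound (X : Type) (Y : finType) (Z : X -> bool) (F : set (X -> Y)) k :
  shatter Z F k <= #|{ffun 'I_k -> Y}|.
Proof.
apply: shatter_le => z _; by rewrite -ltnS npat_le_card.
Qed.

Lemma card_le_img (T U : finType) (A : {set T}) (B : {set U}) (phi : U -> T) :
  (forall t, t \in A -> exists2 q, q \in B & t = phi q) -> #|A| <= #|B|.
Proof.
move=> h; apply: leq_trans (leq_imset_card phi B).
apply: subset_leq_card; apply/fintype.subsetP => t /h [q qB ->]; exact: imset_f.
Qed.

Lemma part1 (X : Type) (G H : set (X -> bool)) (cstar : X -> bool) :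
  group_realizable G H cstar ->
  (forall g, G g -> exists x, g x) ->
  forall g, G g -> forall k,
     shatter (fun _ => true) (F_group G H cstar g) k <= shatter g H k.
Proof.
move=> hcs hne g Gg k.
have [x0 gx0] := hne g Gg.
have [hs [Hhs hhs]] := hcs g Gg.
apply: shatter_le => z _.
pose z' i := if g (z i) then z i else x0.
have hz' : forall i, g (z' i) by move=> i; rewrite /z'; case: ifP.
apply: leq_trans (@shatter_ge X bool g H k z' hz').
rewrite /npat.
pose phi (q : {ffun 'I_k -> bool}) : {ffun 'I_k -> bool} :=
  [ffun i => g (z i) && (q i != hs (z' i))].
apply: (@card_le_img _ _ _ _ phi) => t; rewrite inE => /asboolP [f [[c [hc ->]] ->]].
have [h [Hh hh]] := hc g Gg.
exists [ffun i => h (z' i)].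
  by rewrite inE; apply/asboolP; exists h.
apply/ffunP => i; rewrite !ffunE /symdiff /z'.
case gz: (g (z i)) => //=.
by rewrite hh // hhs.
Qed.

End Aux.

Theorem mainTheorem4 (X : Type) (G H : set (X -> bool)) (cstar : X -> bool) :
  group_realizable G H cstar ->
  (forall g, G g -> exists x, g x) ->
  (forall g, G g -> forall k, (0 < k)%N ->
     (shatter (fun _ => true) (F_group G H cstar g) k <= shatter g H k)%N)
  /\
  (forall k, (0 < k)%N ->
     (shatter (fun _ => true) (F_all G H cstar) k <=
      shatter (fun _ => true) G k * sup_group_shatter G H k)%N).
Proof.
move=> hcs hne; split.
  by move=> g Gg k _; apply: part1.
move=> k _.
apply: shatter_le => z _.
pose PG := [set t : {ffun 'I_k -> bool} |
             `[< exists f, G f /\ t = [ffun i => f (z i)] >]].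
pose A (p : {ffun 'I_k -> bool}) := [set t : {ffun 'I_k -> bool} |
  `[< exists c, group_realizable G H c /\
       t = [ffun i => p i && symdiff c cstar (z i)] >]].
have sub : [set t : {ffun 'I_k -> bool} |
    `[< exists f, F_all G H cstar f /\ t = [ffun i => f (z i)] >]]
    \subset \bigcup_(p in PG) A p.
  apply/fintype.subsetP => t; rewrite inE => /asboolP [f [[g [c [Gg [hc ->]]]] ->]].
  apply/bigcupP; exists [ffun i => g (z i)].
    by rewrite inE; apply/asboolP; exists g.
  rewrite inE; apply/asboolP; exists c; split => //.
  by apply/ffunP => i; rewrite !ffunE.
have hA : forall p, p \in PG -> #|A p| <= sup_group_shatter G H k.
  move=> p; rewrite inE => /asboolP [g [Gg ->]].
  apply: leq_trans (_ : shatter g H k <= _).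
    apply: leq_trans (@part1 X G H cstar hcs hne g Gg k).
    apply: leq_trans (@shatter_ge X bool (fun _ => true) (F_group G H cstar g) k z _) => //.
    apply: subset_leq_card; apply/fintype.subsetP => t; rewrite inE => /asboolP [c [hc ->]].
    rewrite inE; apply/asboolP; exists (fun x => g x && symdiff c cstar x); split.
      by exists c.
    by apply/ffunP => i; rewrite !ffunE.
  rewrite /sup_group_shatter.
  have := @leq_bigmax_cond _
    (fun n : 'I_#|{ffun 'I_k -> bool}|.+1 =>
       `[< exists g0, G g0 /\ shatter g0 H k = n >])
    (fun n => nat_of_ord n)
    (Ordinal (leq_ltn_trans (@shatter_bound X bool g H k) (ltnSn _))).
  apply; apply/asboolP; by exists g.
apply: leq_trans (subset_leq_card sub) _.
apply: leq_trans; first exact: card_bigcup_leq.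
apply: (@leq_trans (\sum_(p in PG) sup_group_shatter G H k)).
  by apply: leq_sum => p pP; exact: hA.
rewrite sum_nat_const leq_mul2r; apply/orP; right.
exact: (@shatter_ge X bool (fun _ => true) G k z).
Qed.
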